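(* Let $\lambda,\mu$ be partitions and $j\in\mathbb Z$. Suppose $\mu$ has an addable node $\mathfrak m$ in column $j$ but $\lambda$ has no addable node in column $j$, and let $\mu^+=\mu\cup\{\mathfrak m\}$. Then $\mathrm i_{\lambda\mu}=\mathrm i_{\lambda\mu^+}$.
   Context: Partitions are identified with Young diagrams $\{(a,b)\in\mathbb N^2:b\le\lambda_a\}$; nodes are elements of $\mathbb N^2$; $(a,b)$ has height $a+b$ and lies in column $b-a$ (smaller column = further left). Neighbours: $\mathtt{NE}(\mathfrak n)=\mathfrak n+(0,1)$, $\mathtt{SE}(\mathfrak n)=\mathfrak n-(1,0)$, $\mathtt{N}(\mathfrak n)=\mathfrak n+(1,1)$. An addable node of $\lambda$ is a node not in $\lambda$ whose addition gives a partition. A tile is a finite nonempty set of nodes orderable $\mathfrak n_1,\dots,\mathfrak n_r$ with $\mathfrak n_{i+1}\in\{\mathtt{NE}(\mathfrak n_i),\mathtt{SE}(\mathfrak n_i)\}$, with start (leftmost node) and end (rightmost node); it is a Dyck tile if its start and end both attain the maximal height of its nodes. A Dyck tiling of $\lambda\setminus\mu$ (for $\lambda\supseteq\mu$) is a partition of $\lambda\setminus\mu$ into Dyck tiles. It is cover-inclusive if whenever $\mathfrak a$ and $\mathtt N(\mathfrak a)$ both lie in $\lambda\setminus\mu$, the tile containing $\mathtt N(\mathfrak a)$ starts weakly to the left of, and ends weakly to the right of, the tile containing $\mathfrak a$. $\mathrm i_{\lambda\mu}$ is the number of cover-inclusive Dyck tilings of $\lambda\setminus\mu$ if $\lambda\supseteq\mu$,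 and $0$ otherwise. *)

(* Defs.v *)
From HB Require Import structures.
From mathcomp Require Import all_boot all_order all_algebra.
From mathcomp Require Import finmap.
From mathcomp Require Import boolp.
Set Implicit Arguments. Unset Strict Implicit. Unset Printing Implicit Defensive.
Import Order.TTheory GRing.Theory Num.Theory.
Local Open Scope fset_scope.

(* Nodes are elements of N^2 (diagram nodes have both coordinates >= 1). *)
Definition node := (nat * nat)%type.

Definition is_partition (s : seq nat) : bool :=
  sorted geq s && all (fun x => 0 < x) s.

(* Young diagram {(a,b) : 1 <= a, 1 <= b <= lambda_a}. *)
Definition diag (s : seq nat) : {fset node} :=
  seq_fset tt (flatten [seq [seq (i.+1, j.+1) | j <- iota 0 (nth 0 s i)]
                         | i <- iota 0 (size s)]).

Definition height (n : node) : nat := n.1 + n.2.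
Definition column (n : node) : int := (n.2%:Z - n.1%:Z)%R.

Definition NE (n : node) : node := (n.1, n.2.+1).
Definition SE (n : node) : node := (n.1.-1, n.2).
Definition N (n : node) : node := (n.1.+1, n.2.+1).

Definition addable (s : seq nat) (n : node) : Prop :=
  n \notin diag s /\
  exists nu : seq nat, is_partition nu /\ diag nu = n |` diag s.

Definition tile_step (x y : node) : bool := (y == NE x) || (y == SE x).

Definition is_tile (t : {fset node}) : Prop :=
  exists s : seq node,
    [/\ s != [::], uniq s, sorted tile_step s & t = seq_fset tt s].

Definition is_start (t : {fset node}) (n : node) : Prop :=
  n \in t /\ forall x, x \in t -> (column n <= column x)%R.
Definition is_end (t : {fset node}) (n : node) : Prop :=
  n \in t /\ forall x, x \in t -> (column x <= column n)%R.

Definition is_dyck_tile (t : {fset node}) : Prop :=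
  is_tile t /\
  forall s e, is_start t s -> is_end t e ->
    forall x, x \in t -> height x <= height s /\ height x <= height e.

Definition is_dyck_tiling (D : {fset node}) (P : {fset {fset node}}) : Prop :=
  [/\ (forall t, t \in P -> is_dyck_tile t /\ t `<=` D),
      (forall t1 t2, t1 \in P -> t2 \in P -> t1 != t2 -> [disjoint t1 & t2])
    & (forall x, x \in D -> exists2 t, t \in P & x \in t)].

Definition cover_inclusive (D : {fset node}) (P : {fset {fset node}}) : Prop :=
  forall a t t', a \in D -> N a \in D -> t \in P -> t' \in P ->
    a \in t -> N a \in t' ->
    (forall s s', is_start t s -> is_start t' s' -> (column s' <= column s)%R) /\
    (forall e e', is_end t e -> is_end t' e' -> (column e <= column e')%R).

Definition is_ci_dyck_tiling (D : {fset node}) (P : {fset {fset node}}) : Prop :=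
  is_dyck_tiling D P /\ cover_inclusive D P.

(* Every tiling of D is a set of subsets
   of D, so they are all counted inside fpowerset (fpowerset D). *)
Definition skew (lam mu : seq nat) : {fset node} := diag lam `\` diag mu.

Definition i_num (lam mu : seq nat) : nat :=
  if diag mu `<=` diag lam then
    #|` [fset P in fpowerset (fpowerset (skew lam mu))
           | `[< is_ci_dyck_tiling (skew lam mu) P >]] |
  else 0.

(* Main.v *)
Require Import Defs.
From HB Require Import structures.
From mathcomp Require Import all_boot all_order all_algebra.
From mathcomp Require Import finmap.
From mathcomp Require Import boolp.
From mathcomp Require Import zify.
From Stdlib Require Import Classical.
Local Open Scope fset_scope.

Lemma mem_diag (s : seq nat) (x : node) :
  (x \in diag s) = [&& 0 < x.1, 0 < x.2 & x.2 <= nth 0 s x.1.-1].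
Proof.
rewrite /diag seq_fsetE; apply/flatten_mapP/idP.
  case=> i; rewrite mem_iota add0n => /andP[_ Hi] /mapP[k].
  by rewrite mem_iota add0n => /andP[_ Hk] ->.
case: x => [[|a] [|b]] //= H.
exists a; first by rewrite mem_iota add0n /=; apply: contraTT H; rewrite -!leqNgt => /(nth_default 0) ->.
by apply/mapP; exists b => //; rewrite mem_iota.
Qed.

Lemma part_nth (s : seq nat) :
  is_partition s <-> (forall k, nth 0 s k.+1 <= nth 0 s k) /\ (forall k, k < size s -> 0 < nth 0 s k).
Proof.
rewrite /is_partition; split.
  case/andP=> /(sortedP 0) Hs /allP Hp; split.
    move=> k; case: (ltnP k.+1 (size s)) => h; first exact: Hs.
    by rewrite nth_default.
  by move=> k hk; apply: Hp; apply: mem_nth.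
case=> H1 H2; apply/andP; split; first by apply/(sortedP 0) => i _; apply: H1.
by apply/(all_nthP 0) => i hi; apply: H2.
Qed.

Lemma part_mono (s : seq nat) k k' : is_partition s -> k <= k' -> nth 0 s k' <= nth 0 s k.
Proof.
move=> /part_nth [H _]; elim: k' => [|k' IH]; first by rewrite leqn0 => /eqP ->.
rewrite leq_eqVlt => /orP[/eqP -> //| ]; rewrite ltnS => /IH h.
exact: leq_trans (H _) h.
Qed.

Lemma diag_down (s : seq nat) (x y : node) : is_partition s -> x \in diag s ->
  0 < y.1 -> 0 < y.2 -> y.1 <= x.1 -> y.2 <= x.2 -> y \in diag s.
Proof.
move=> Hs; rewrite !mem_diag => /andP[h1 /andP[h2 h3]] g1 g2 l1 l2.
rewrite g1 g2 /=; apply: leq_trans l2 (leq_trans h3 _).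
apply: part_mono => //; lia.
Qed.

Set Implicit Arguments. Unset Strict Implicit.

Lemma col_step {x y : node} : tile_step x y -> x != y -> column y = (column x + 1)%R.
Proof.
case: x y => [x1 x2] [y1 y2]; rewrite /tile_step /NE /SE /column /=.
case/orP=> /eqP [-> ->] hne; first lia.
case: x1 hne => [|x1] hne /=; first by rewrite eqxx in hne.
lia.
Qed.

Lemma path_col (s : seq node) x0 : uniq s -> sorted tile_step s ->
  forall i, i < size s -> column (nth x0 s i) = (column (nth x0 s 0) + i%:Z)%R.
Proof.
move=> Hu /(sortedP x0) Hs; elim=> [|i IH] hi; first by rewrite GRing.addr0.
have hne : nth x0 s i != nth x0 s i.+1 by rewrite (nth_uniq x0 (ltnW hi) hi Hu); lia.
rewrite (col_step (Hs i hi) hne) IH; last by apply: ltnW.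
lia.
Qed.

Section TileFacts.
Variable (T : {fset node}) (s : seq node).
Hypotheses (Hne : s != [::]) (Hu : uniq s) (Hs : sorted tile_step s) (HT : T = seq_fset tt s).
Let x0 : node := (0,0).

Lemma tile_memE x : x \in T -> exists2 i, i < size s & x = nth x0 s i.
Proof.
rewrite HT seq_fsetE => hx; exists (index x s); first by rewrite index_mem.
by rewrite nth_index.
Qed.

Lemma tile_nth i : i < size s -> nth x0 s i \in T.
Proof. by move=> hi; rewrite HT seq_fsetE mem_nth. Qed.

Lemma tile_col_inj x y : x \in T -> y \in T -> column x = column y -> x = y.
Proof.
move=> /tile_memE [i hi ->] /tile_memE [k hk ->].
rewrite (@path_col s x0 Hu Hs i hi) (@path_col s x0 Hu Hs k hk) => h.
have -> : i = k by lia.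
done.
Qed.

Lemma tile_succ x y : x \in T -> y \in T -> (column x < column y)%R ->
  exists2 z, z \in T & tile_step x z /\ x != z.
Proof.
move=> /tile_memE [i hi ->] /tile_memE [k hk ->].
rewrite (@path_col s x0 Hu Hs i hi) (@path_col s x0 Hu Hs k hk) => h.
have hi1 : i.+1 < size s by lia.
exists (nth x0 s i.+1); first exact: tile_nth.
split; first exact: (sortedP x0 Hs).
by rewrite (nth_uniq x0 (ltnW hi1) hi1 Hu); lia.
Qed.

Lemma tile_pred x y : x \in T -> y \in T -> (column y < column x)%R ->
  exists2 z, z \in T & tile_step z x /\ z != x.
Proof.
move=> /tile_memE [i hi ->] /tile_memE [k hk ->].
rewrite (@path_col s x0 Hu Hs i hi) (@path_col s x0 Hu Hs k hk) => h.
case: i hi h => [|i] hi h; first lia.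
exists (nth x0 s i); first by apply: tile_nth; lia.
split; first exact: (sortedP x0 Hs).
by rewrite (nth_uniq x0 (ltnW hi) hi Hu); lia.
Qed.

Lemma tile_start : exists st, is_start T st.
Proof.
have h0 : 0 < size s by case: s Hne.
exists (nth x0 s 0); split; first exact: tile_nth.
move=> x /tile_memE [i hi ->]; rewrite (@path_col s x0 Hu Hs i hi); lia.
Qed.

Lemma tile_end : exists e, is_end T e.
Proof.
have h0 : 0 < size s by case: s Hne.
exists (nth x0 s (size s).-1); split; first by apply: tile_nth; lia.
move=> x /tile_memE [i hi ->]; rewrite (@path_col s x0 Hu Hs i hi) (@path_col s x0 Hu Hs (size s).-1) ; lia.
Qed.
End TileFacts.

Lemma T_col_inj T x y : is_tile T -> x \in T -> y \in T -> column x = column y -> x = y.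
Proof. by case=> s [h1 h2 h3 h4]; apply: (@tile_col_inj T s h1 h2 h3 h4). Qed.
Lemma T_succ T x y : is_tile T -> x \in T -> y \in T -> (column x < column y)%R ->
  exists2 z, z \in T & tile_step x z /\ x != z.
Proof. by case=> s [h1 h2 h3 h4]; apply: (@tile_succ T s h1 h2 h3 h4). Qed.
Lemma T_pred T x y : is_tile T -> x \in T -> y \in T -> (column y < column x)%R ->
  exists2 z, z \in T & tile_step z x /\ z != x.
Proof. by case=> s [h1 h2 h3 h4]; apply: (@tile_pred T s h1 h2 h3 h4). Qed.
Lemma T_start T : is_tile T -> exists st, is_start T st.
Proof. by case=> s [h1 h2 h3 h4]; apply: (@tile_start T s h1 h2 h3 h4). Qed.
Lemma T_end T : is_tile T -> exists st, is_end T st.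
Proof. by case=> s [h1 h2 h3 h4]; apply: (@tile_end T s h1 h2 h3 h4). Qed.

Definition LL (x : node) : node := (x.1, x.2.-1).
Definition LR (x : node) : node := (x.1.-1, x.2).
Definition UL (x : node) : node := (x.1.+1, x.2).
Definition UR (x : node) : node := (x.1, x.2.+1).

Lemma step_S T x y1 y2 : is_tile T -> x \in T -> y1 \in T -> y2 \in T ->
  (column y1 < column x)%R -> (column x < column y2)%R ->
  LL x \notin T -> LR x \notin T -> UL x \in T /\ UR x \in T.
Proof.
move=> hT hx hy1 hy2 c1 c2 hLL hLR; split.
  have [[p1 p2] hp [hst hne]] := T_pred hT hx hy1 c1.
  move: hx hLL hLR c1 c2 hst hne; case: x => x1 x2 hx hLL hLR c1 c2 hst hne.
  rewrite /tile_step /NE /SE /= in hst.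
  case/orP: hst => /eqP [e1 e2]; subst.
    by rewrite /LL /= hp in hLL.
  destruct p1 as [|p1]; first by rewrite eqxx in hne.
  by rewrite /UL /=.
have [[z1 z2] hz [hst hne]] := T_succ hT hx hy2 c2.
move: hx hLL hLR c1 c2 hst hne; case: x => x1 x2 hx hLL hLR c1 c2 hst hne.
rewrite /tile_step /NE /SE /= in hst.
case/orP: hst => /eqP [e1 e2]; subst; first by [].
by rewrite /LR /= hz in hLR.
Qed.

Lemma mk_addable s (i c : nat) : is_partition s -> 0 < i -> 0 < c -> (i,c) \notin diag s ->
  (i = 1 \/ (i.-1, c) \in diag s) -> (c = 1 \/ (i, c.-1) \in diag s) -> addable s (i,c).
Proof.
move=> Hs hi hc hn h1 h2; split => //.
have hlt : nth 0 s i.-1 < c by move: hn; rewrite mem_diag /= hi hc /= -ltnNge.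
have heq : nth 0 s i.-1 = c.-1.
  case: h2 => [e|]; first lia.
  rewrite mem_diag /=; lia.
have h1' : i = 1 \/ c <= nth 0 s i.-2.
  case: h1 => [e|]; [by left | rewrite mem_diag /= => h; right; lia].
have [Hm Hp] := (part_nth s).1 Hs.
exists (set_nth 0 s i.-1 c); split.
  apply/part_nth; split.
    move=> k; rewrite !nth_set_nth /=.
    have := Hm k.
    case: eqP => e1; case: eqP => e2; try lia.
      case: h1' => h; first lia.
      have -> : k = i.-2 by lia.
      done.
    rewrite e2 => _; have := Hm i.-1; have -> : i.-1.+1 = i by lia.
    lia.
  move=> k; rewrite size_set_nth nth_set_nth /=.
  case: eqP => e1 hk; first lia.
  case: (ltnP k (size s)) => hks; first exact: Hp.
  exfalso; case: h1' => h; first lia.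
  have : size s <= i.-2 by lia.
  move/(nth_default 0) => h3; lia.
apply/fsetP => -[x1 x2]; rewrite in_fset1U !mem_diag /= nth_set_nth /= xpair_eqE.
case: (x1 =P i) => e1.
  subst x1; rewrite eqxx /=.
  case: (x2 =P c) => e2 /=; first by subst; rewrite hi hc leqnn.
  rewrite hi /=; apply/idP/idP => /andP[a b]; apply/andP; split => //; lia.
rewrite /=.
case: (x1.-1 =P i.-1) => e3 //.
have -> : x1 = 0 by lia.
done.
Qed.

Lemma mem_skew (l m : seq nat) (x : node) : (x \in Defs.skew l m) = (x \in diag l) && (x \notin diag m).
Proof. by rewrite /Defs.skew in_fsetD andbC. Qed.

Section Key.
Variables (lam mu : seq nat) (a b : nat) (P : {fset {fset node}}).
Hypotheses (Hl : is_partition lam) (Hmu : is_partition mu).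
Let D := Defs.skew lam mu.
Let m : node := (a, b).
Hypotheses (hm : m \in D) (hLL : LL m \notin D) (hLR : LR m \notin D)
  (noadd : ~ exists n, addable lam n /\ column n = column m)
  (HP : is_ci_dyck_tiling D P).

Let xk k : node := ((a + k)%N, (b + k)%N).

Lemma ha : 0 < a. Proof. by move: hm; rewrite mem_skew mem_diag => /andP[/andP[]]. Qed.
Lemma hb : 0 < b. Proof. by move: hm; rewrite mem_skew mem_diag => /andP[/andP[_ /andP[]]]. Qed.

Lemma tileP T : T \in P -> is_dyck_tile T /\ T `<=` D.
Proof. by case: HP => [[H _ _] _]; apply: H. Qed.

Lemma coverP x : x \in D -> exists2 T, T \in P & x \in T.
Proof. by case: HP => [[_ _ H] _]; apply: H. Qed.

Lemma disjP T T' x : T \in P -> T' \in P -> T != T' -> x \in T -> x \notin T'.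
Proof. by case: HP => [[_ H _] _] h1 h2 h3; move/fdisjointP: (H _ _ h1 h2 h3); apply. Qed.

Lemma ciP x T T' : x \in D -> N x \in D -> T \in P -> T' \in P -> x \in T -> N x \in T' ->
    (forall s s', is_start T s -> is_start T' s' -> (column s' <= column s)%R) /\
    (forall e e', is_end T e -> is_end T' e' -> (column e <= column e')%R).
Proof. by case: HP => [_ H]; apply: H. Qed.

Lemma key_claim T0 : T0 \in P -> m \in T0 -> T0 != [fset m] ->
  forall k, xk k \in D /\ exists2 T, T \in P & [/\ xk k \in T, UL (xk k) \in T & UR (xk k) \in T].
Proof.
move=> hT0 hm0 hne; elim=> [|k [hxD [T hT [hx hUL hUR]]]].
  have -> : xk 0 = m by rewrite /xk !addn0.
  split=> //; exists T0 => //.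
  have [[htile hdy] hsub] := tileP hT0.
  have hLL0 : LL m \notin T0 by apply: contra hLL => h; apply: (fsubsetP hsub).
  have hLR0 : LR m \notin T0 by apply: contra hLR => h; apply: (fsubsetP hsub).
  have [y hy hym] : exists2 y, y \in T0 & y != m.
    apply: NNPP => H; move/eqP: hne; apply; apply/fsetP => x; rewrite in_fset1.
    apply/idP/eqP => [hx|->//]; apply: NNPP => hxm; apply: H; exists x => //; exact/eqP.
  have hcy : column y != column m.
    by apply/eqP => e; move/eqP: hym; apply; apply: (T_col_inj htile).
  have left : exists2 y1, y1 \in T0 & (column y1 < column m)%R.
    apply: NNPP => H.
    have Hge : forall x, x \in T0 -> (column m <= column x)%R.
      move=> x hx; apply: NNPP => hlt; apply: H; exists x => //; rewrite Order.TotalTheory.ltNge; exact/negP.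
    have cgt : (column m < column y)%R by rewrite Order.POrderTheory.lt_neqAle eq_sym hcy Hge.
    have [z hz [hst hzne]] := T_succ htile hm0 hy cgt.
    have ez : z = NE m.
      move: hst; rewrite /tile_step => /orP[/eqP //| /eqP ez].
      by rewrite ez in hz; rewrite hz in hLR0.
    have [e he] := T_end htile.
    have := (hdy m e (conj hm0 Hge) he z hz).1.
    by rewrite ez /height /NE /= addnS ltnn.
  have right : exists2 y2, y2 \in T0 & (column m < column y2)%R.
    apply: NNPP => H.
    have Hle : forall x, x \in T0 -> (column x <= column m)%R.
      move=> x hx; apply: NNPP => hlt; apply: H; exists x => //; rewrite Order.TotalTheory.ltNge; exact/negP.
    case: left => y1 hy1 c1.
    have [p hp [hst hpne]] := T_pred htile hm0 hy1 c1.
    have [st hst'] := T_start htile.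
    have := (hdy st m hst' (conj hm0 Hle) p hp).2.
    move: hst hpne hp; case: p => p1 p2; rewrite /tile_step /NE /SE /= => /orP[/eqP [e1 e2]|/eqP [e1 e2]].
      by subst => _ hp; rewrite /LL /= hp in hLL0.
    subst; destruct p1 as [|p1]; first by rewrite eqxx.
    by move=> _ _; rewrite /height /= ltnn.
  case: left => y1 hy1 c1; case: right => y2 hy2 c2.
  have := step_S htile hm0 hy1 hy2 c1 c2 hLL0 hLR0.
  by case=> h1 h2; split.
have [[htile hdy] hsub] := tileP hT.
have inD z : z \in T -> z \in D by move=> h; apply: (fsubsetP hsub).
have inL z : z \in T -> z \in diag lam by move/inD; rewrite mem_skew => /andP[].
have hNx : N (xk k) = xk k.+1 by rewrite /N /xk /= !addnS.
have hx'l : xk k.+1 \in diag lam.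
  apply: NNPP => hn; apply: noadd; exists ((a+k).+1, (b+k).+1); split.
    apply: mk_addable => //.
    - by rewrite /xk -!addnS; apply/negP.
    - by right; have := inL _ hUR.
    - by right; have := inL _ hUL.
  rewrite /column /m /=; clear -a b k; lia.
have hx'D : xk k.+1 \in D.
  rewrite mem_skew hx'l /=; apply/negP => hmu.
  move: hxD; rewrite mem_skew => /andP[_ /negP]; apply.
  apply: (@diag_down mu _ _ Hmu hmu); rewrite /xk /= ?addnS //.
  - by rewrite addn_gt0 ha.
  - by rewrite addn_gt0 hb.
split=> //.
have [T' hT' hx'] := coverP hx'D.
have [[htile' hdy'] hsub'] := tileP hT'.
have hTT : T != T'.
  apply/eqP => e; subst T'.
  have := T_col_inj htile hx hx'.
  have -> : column (xk k) = column (xk k.+1) by rewrite /column /xk /=; clear -a b k; lia.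
  move=> h; have := h erefl; rewrite /xk => -[]; clear -k; lia.
have [st hst] := T_start htile; have [st' hst'] := T_start htile'.
have [e he] := T_end htile; have [e' he'] := T_end htile'.
rewrite -hNx in hx' hx'D.
have [ci1 ci2] := ciP hxD hx'D hT hT' hx hx'.
have c1 := ci1 _ _ hst hst'; have c2 := ci2 _ _ he he'.
have c3 := hst.2 _ hUL; have c4 := he.2 _ hUR.
have hLL' : LL (N (xk k)) \notin T' by apply: (disjP hT hT' hTT).
have hLR' : LR (N (xk k)) \notin T' by apply: (disjP hT hT' hTT).
have cl : (column st' < column (N (xk k)))%R.
  move: c1 c3; rewrite /column /UL /N /xk /=.
  move: (column st) (column st') => u v; clear -u v a b k; lia.
have cr : (column (N (xk k)) < column e')%R.
  move: c2 c4; rewrite /column /UR /N /xk /=.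
  move: (column e) (column e') => u v; clear -u v a b k; lia.
have [h1 h2] := step_S htile' hx' hst'.1 he'.1 cl cr hLL' hLR'.
by exists T' => //; rewrite -hNx.
Qed.

Lemma key T0 : T0 \in P -> m \in T0 -> T0 = [fset m].
Proof.
move=> h1 h2; apply: NNPP => /eqP hne.
have [hD _] := key_claim h1 h2 hne (size lam).
move: hD; rewrite mem_skew mem_diag /xk /= => /andP[/andP[_ /andP[_ h]] _].
have ha' := ha; have hb' := hb.
rewrite nth_default in h; [move: h ha' hb'; clear; lia | move: ha' hb'; clear; lia].
Qed.
End Key.

Definition Aset (D : {fset node}) :=
  [fset P in fpowerset (fpowerset D) | `[< is_ci_dyck_tiling D P >]].

Lemma memA D P : P \in Aset D <-> is_ci_dyck_tiling D P.
Proof.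
rewrite /Aset !inE /=; split; first by case/andP => _ /asboolP.
move=> h; apply/andP; split; last exact/asboolP.
rewrite fpowersetE; apply/fsubsetP => t ht; rewrite fpowersetE.
by case: h => [[H _ _] _]; case: (H t ht).
Qed.

Lemma singleton_dyck (m : node) : is_dyck_tile [fset m].
Proof.
split.
  exists [:: m]; split => //; apply/fsetP => x; by rewrite seq_fsetE in_fset1 mem_seq1.
move=> s e [hs _] [he _] x; rewrite !in_fset1 in hs he * => /eqP -> .
by rewrite (eqP hs) (eqP he).
Qed.

Section Bij.
Variables (D : {fset node}) (m : node).
Hypotheses (hm : m \in D)
  (hkey : forall P, is_ci_dyck_tiling D P -> forall T, T \in P -> m \in T -> T = [fset m])
  (hN : forall a, a \in D -> N a != m).

Lemma mInP P : is_ci_dyck_tiling D P -> [fset m] \in P.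
Proof.
move=> h; have [[_ _ H] _] := h; have [T hT hmT] := H m hm.
by rewrite -(hkey h hT hmT).
Qed.

Lemma notinQ Q : is_ci_dyck_tiling (D `\ m) Q -> [fset m] \notin Q.
Proof.
case=> [[H _ _] _]; apply/negP => /H [_ /fsubsetP hs].
by have := hs m; rewrite in_fset1 eqxx in_fsetD1 eqxx => /(_ erefl).
Qed.

Lemma toB P : is_ci_dyck_tiling D P -> is_ci_dyck_tiling (D `\ m) (P `\ [fset m]).
Proof.
move=> h; have [[H1 H2 H3] H4] := h.
have mt t x : t \in P -> x \in t -> t != [fset m] -> x != m.
  by move=> ht hx hne; apply/eqP => e; subst x; move/eqP: hne; apply; apply: (hkey h).
split; first split.
- move=> t; rewrite in_fsetD1 => /andP[hne ht]; have [hd hs] := H1 t ht; split => //.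
  apply/fsubsetP => x hx; rewrite in_fsetD1 (mt t x) //=; exact: (fsubsetP hs).
- move=> t1 t2; rewrite !in_fsetD1 => /andP[_ h1] /andP[_ h2]; exact: H2.
- move=> x; rewrite in_fsetD1 => /andP[hxm hx]; have [t ht hxt] := H3 x hx.
  exists t => //; rewrite in_fsetD1 ht andbT; apply/eqP => e; subst t.
  by move: hxt; rewrite in_fset1 (negbTE hxm).
- move=> x t t'; rewrite !in_fsetD1 => /andP[_ hx] /andP[_ hNx] /andP[_ ht] /andP[_ ht'].
  exact: H4.
Qed.

Lemma toA Q : is_ci_dyck_tiling (D `\ m) Q -> is_ci_dyck_tiling D ([fset m] |` Q).
Proof.
move=> h; have [[H1 H2 H3] H4] := h.
have hQm := notinQ h.
have sub t : t \in Q -> t `<=` D.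
  move=> ht; have [_ hs] := H1 t ht; apply/fsubsetP => x /(fsubsetP hs).
  by rewrite in_fsetD1 => /andP[].
have mnot t : t \in Q -> m \notin t.
  move=> ht; have [_ /fsubsetP hs] := H1 t ht; apply/negP => /hs.
  by rewrite in_fsetD1 eqxx.
split; first split.
- move=> t; rewrite in_fset1U => /orP[/eqP ->|ht].
    by split; [exact: singleton_dyck | rewrite fsub1set].
  by have [hd _] := H1 t ht; split => //; apply: sub.
- move=> t1 t2; rewrite !in_fset1U => /orP[/eqP ->|h1] /orP[/eqP ->|h2] hne.
  + by rewrite eqxx in hne.
  + by apply/fdisjointP => x; rewrite in_fset1 => /eqP ->; apply: mnot.
  + apply/fdisjointP => x hx; rewrite in_fset1; apply/eqP => e; subst x.
    by move: hx; apply/negP; apply: mnot.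
  + exact: H2.
- move=> x hx; case: (x =P m) => [->|hxm].
    by exists [fset m]; rewrite ?in_fset1U ?in_fset1 eqxx.
  have [t ht hxt] : exists2 t, t \in Q & x \in t by apply: H3; rewrite in_fsetD1 hx andbT; apply/eqP.
  by exists t => //; rewrite in_fset1U ht orbT.
- move=> x t t' hx hNx; rewrite !in_fset1U => /orP[/eqP ->|ht] /orP[/eqP ->|ht'] hxt hNxt.
  + by move: hNxt; rewrite in_fset1 => /eqP e; move: (hN hx); rewrite e eqxx.
  + move: hxt; rewrite in_fset1 => /eqP e; subst x.
    split=> s s' [hs _] [hs' Hs'].
      by rewrite in_fset1 in hs; rewrite (eqP hs); have := Hs' _ hNxt; rewrite /column /N /=; lia.
    rewrite in_fset1 in hs; rewrite (eqP hs); have := Hs' _ hNxt; rewrite /column /N /=; lia.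
  + by move: hNxt; rewrite in_fset1 => /eqP e; move: (hN hx); rewrite e eqxx.
  + apply: (H4 x t t') => //.
    * rewrite in_fsetD1 hx andbT; apply/eqP => e; subst x; by move: hxt; apply/negP; apply: mnot.
    * rewrite in_fsetD1 hNx andbT; exact: hN.
Qed.

Lemma card_bij : #|` Aset D| = #|` Aset (D `\ m)|.
Proof.
have -> : Aset (D `\ m) = (fun P => P `\ [fset m]) @` Aset D.
  apply/fsetP => Q; apply/idP/imfsetP.
    move/memA => hQ; exists ([fset m] |` Q); first by apply/memA; exact: toA.
    by rewrite fsetU1K // notinQ.
  by case=> P /memA hP ->; apply/memA; exact: toB.
apply/esym/eqP/card_in_imfsetP => P1 P2 /memA h1 /memA h2 e.
by rewrite -(fsetD1K (mInP h1)) -(fsetD1K (mInP h2)) /= e.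
Qed.
End Bij.

Unset Implicit Arguments. Set Strict Implicit.

Theorem proposition3p3 (lam mu : seq nat) (j : int) (m : node) (muplus : seq nat) :
  is_partition lam -> is_partition mu ->
  addable mu m -> column m = j ->
  ~ (exists n, addable lam n /\ column n = j) ->
  is_partition muplus -> diag muplus = m |` diag mu ->
  i_num lam mu = i_num lam muplus.
Proof.
case: m => a b Hl Hmu [hmnot [nu [Hnu hdnu]]] hcol noadd Hmp hdmp.
have hmnu : (a, b) \in diag nu by rewrite hdnu in_fset1U eqxx.
have below (y : node) : 0 < y.1 -> 0 < y.2 -> y.1 <= a -> y.2 <= b -> y != (a, b) -> y \in diag mu.
  move=> p1 p2 l1 l2 hne.
  have : y \in diag nu by exact: (@diag_down nu (a, b) y Hnu hmnu p1 p2 l1 l2).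
  by rewrite hdnu in_fset1U (negbTE hne).
move: (hmnu); rewrite mem_diag => /andP[/= ma /andP[/= mb _]].
rewrite /i_num hdmp.
have hsubU : ((a, b) |` diag mu `<=` diag lam) = ((a, b) \in diag lam) && (diag mu `<=` diag lam).
  by rewrite fsubUset fsub1set.
rewrite hsubU.
case: (boolP (diag mu `<=` diag lam)) => hsub; last by rewrite andbF.
case: (boolP ((a, b) \in diag lam)) => hml /=; last first.
  exfalso; apply: noadd; exists (a, b); split => //.
  apply: mk_addable => //=.
  - case: (a =P 1) => e; [by left | right].
    apply: (fsubsetP hsub); apply: below => //=; try lia.
    by rewrite xpair_eqE; apply/nandP; left; lia.
  - case: (b =P 1) => e; [by left | right].
    apply: (fsubsetP hsub); apply: below => //=; try lia.
    by rewrite xpair_eqE; apply/nandP; right; lia.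
have notD (y : node) : 0 < y.1 -> 0 < y.2 -> y.1 <= a -> y.2 <= b -> y != (a, b) ->
    y \notin Defs.skew lam mu.
  by move=> p1 p2 l1 l2 hne; rewrite mem_skew (below y p1 p2 l1 l2 hne) andbF.
have out0 (y : node) : (y.1 == 0) || (y.2 == 0) -> y \notin Defs.skew lam mu.
  by move=> h; rewrite mem_skew mem_diag; case/orP: h => /eqP ->; rewrite ?andbF.
have hmD : (a, b) \in Defs.skew lam mu by rewrite mem_skew hml hmnot.
have hD' : Defs.skew lam muplus = Defs.skew lam mu `\ (a, b).
  apply/fsetP => x; rewrite in_fsetD1 !mem_skew hdmp in_fset1U negb_or.
  by case: (x \in diag lam); case: (x == (a, b)); case: (x \in diag mu).
change (#|` Aset (Defs.skew lam mu)| = #|` Aset (Defs.skew lam muplus)|).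
rewrite hD'; apply: card_bij => //.
- move=> P hP T hT hmT; apply: (key Hl Hmu hmD _ _ _ hP hT hmT).
  + rewrite /LL /=; case: (b =P 1) => e.
      by apply: out0; rewrite /= e orbT.
    have hb1 : 1 < b by move: mb e; clear; lia.
    apply: notD => /=; move: ma mb hb1; clear => ma mb hb1; try lia.
    by apply/negP => /eqP [] ; lia.
  + rewrite /LR /=; case: (a =P 1) => e.
      by apply: out0; rewrite /= e.
    have ha1 : 1 < a by move: ma e; clear; lia.
    apply: notD => /=; move: ma mb ha1; clear => ma mb ha1; try lia.
    by apply/negP => /eqP [] ; lia.
  + by rewrite hcol.
- move=> [x1 x2] hx; rewrite /N /=; apply/eqP => -[e1 e2]; subst a b.
  move: hx; apply/negP.
  case: (x1 =P 0) => e; first by apply: out0; rewrite /= e.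
  case: (x2 =P 0) => e'; first by apply: out0; rewrite /= e' orbT.
  apply: notD => /=; move: e e'; clear => e e'; try lia.
  by apply/negP => /eqP [] ; lia.
Qed.
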